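(* Let $P$ be a strange polytope with base $Q$ (so $V(P)=\tfrac23|Q|$). (i) If $|Q|\le 0.411$ or $|Q|\ge 5.1$ (equivalently $V(P)\le 0.274$ or $V(P)\ge 3.4$), then $\dfrac{S(P)^3}{V(P)^2}>188$. (ii) If $|Q|\le 0.09$ or $|Q|\ge 15$ (equivalently $V(P)\le 0.06$ or $V(P)\ge 10$), then $\dfrac{S(P)^3}{V(P)^2}>344$.
   Context: $|Q|$ is the area of the planar convex set $Q$; $S$, $V$ denote surface area and volume. Strange polytope: a polytope $P=\mathrm{conv}(Q\cup\{v_1,v_2\})$ where $v_1$ is a unit vector, $v_2=-v_1$, $Q=\mathrm{conv}\{o,v_3,v_4,v_5,v_6\}\subset v_1^\perp$ is a convex polygon ($o$ the origin), and either $Q$ is a triangle, or $o$ lies on the relative boundary of $Q$ and $v_3,v_4,v_5,v_6$ are vertices of both $Q$ and $P$; $v_1,v_2$ are its apices and $Q$ its base. *)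

(* Defs.v *)
From Stdlib Require Import Reals Lra Arith List.
Open Scope R_scope.

(* Coordinates: by rigid-motion invariance of S and V we take v1 = e3 = (0,0,1),
   v2 = -e3, and identify the plane v1^perp with R^2 (points (x,y,0)). *)

Fixpoint rsum (n : nat) (f : nat -> R) : R :=
  match n with O => 0 | S m => rsum m f + f m end.

Definition pt2 : Type := (R * R)%type.
Definition origin2 : pt2 := (0, 0).
Definition sub2 (a b : pt2) : pt2 := (fst a - fst b, snd a - snd b).
Definition cross2 (a b : pt2) : R := fst a * snd b - snd a * fst b.
Definition dist2 (a b : pt2) : R :=
  sqrt ((fst a - fst b) ^ 2 + (snd a - snd b) ^ 2).

Definition nxt (n i : nat) : nat := Nat.modulo (S i) n.

Definition convex_polygon_ccw (n : nat) (w : nat -> pt2) : Prop :=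
  (3 <= n)%nat /\
  forall i j, (i < n)%nat -> (j < n)%nat -> j <> i -> j <> nxt n i ->
    cross2 (sub2 (w (nxt n i)) (w i)) (sub2 (w j) (w i)) > 0.

Definition in_hull2 (k : nat) (p : nat -> pt2) (x : pt2) : Prop :=
  exists lam : nat -> R,
    (forall i, (i < k)%nat -> 0 <= lam i) /\ rsum k lam = 1 /\
    fst x = rsum k (fun i => lam i * fst (p i)) /\
    snd x = rsum k (fun i => lam i * snd (p i)).

Definition extreme2 (S : pt2 -> Prop) (x : pt2) : Prop :=
  S x /\ forall p q t, S p -> S q -> 0 < t < 1 ->
    x = (t * fst p + (1 - t) * fst q, t * snd p + (1 - t) * snd q) -> p = q.

(* boundary of a set relative to the plane v1^perp (= relative boundary of a
   2-dimensional convex set lying in that plane) *)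
Definition rel_boundary2 (S : pt2 -> Prop) (x : pt2) : Prop :=
  S x /\ forall eps, eps > 0 -> exists y, dist2 x y < eps /\ ~ S y.

(* area |Q| of the convex polygon with ccw vertex list w (shoelace formula) *)
Definition polygon_area (n : nat) (w : nat -> pt2) : R :=
  / 2 * rsum n (fun i => cross2 (w i) (w (nxt n i))).

Record pt3 : Type := P3 { px : R; py : R; pz : R }.
Definition lift (a : pt2) : pt3 := P3 (fst a) (snd a) 0.
Definition e3 : pt3 := P3 0 0 1.
Definition e3m : pt3 := P3 0 0 (-1).
Definition sub3 (a b : pt3) : pt3 := P3 (px a - px b) (py a - py b) (pz a - pz b).
Definition dot3 (a b : pt3) : R := px a * px b + py a * py b + pz a * pz b.
Definition cross3 (a b : pt3) : pt3 :=
  P3 (py a * pz b - pz a * py b) (pz a * px b - px a * pz b) (px a * py b - py a * px b).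
Definition norm3 (a : pt3) : R := sqrt (dot3 a a).
Definition tri_area (a b c : pt3) : R := / 2 * norm3 (cross3 (sub3 b a) (sub3 c a)).
Definition tet_vol (a b c : pt3) : R := / 6 * Rabs (dot3 a (cross3 b c)).

Definition gensP (n : nat) (w : nat -> pt2) (i : nat) : pt3 :=
  if (i <? n)%nat then lift (w i) else if (i =? n)%nat then e3 else e3m.

Definition in_hull3 (k : nat) (p : nat -> pt3) (x : pt3) : Prop :=
  exists lam : nat -> R,
    (forall i, (i < k)%nat -> 0 <= lam i) /\ rsum k lam = 1 /\
    px x = rsum k (fun i => lam i * px (p i)) /\
    py x = rsum k (fun i => lam i * py (p i)) /\
    pz x = rsum k (fun i => lam i * pz (p i)).

Definition polytopeP (n : nat) (w : nat -> pt2) : pt3 -> Prop :=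
  in_hull3 (n + 2) (gensP n w).

Definition extreme3 (S : pt3 -> Prop) (x : pt3) : Prop :=
  S x /\ forall p q t, S p -> S q -> 0 < t < 1 ->
    x = P3 (t * px p + (1 - t) * px q) (t * py p + (1 - t) * py q)
           (t * pz p + (1 - t) * pz q) -> p = q.

(* S(P): the boundary of P (o in Q) is the union of the triangles
   conv(w_i, w_{i+1}, v1) and conv(w_i, w_{i+1}, v2) (coplanar pairs merge
   into one facet, which does not change the total area). *)
Definition surface_area (n : nat) (w : nat -> pt2) : R :=
  rsum n (fun i => tri_area (lift (w i)) (lift (w (nxt n i))) e3
                 + tri_area (lift (w i)) (lift (w (nxt n i))) e3m).

(* V(P): decomposition of P into the cones from o (in P) over these
   boundary triangles. *)
Definition volume (n : nat) (w : nat -> pt2) : R :=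
  rsum n (fun i => tet_vol (lift (w i)) (lift (w (nxt n i))) e3
                 + tet_vol (lift (w i)) (lift (w (nxt n i))) e3m).

Definition five (o v3 v4 v5 v6 : pt2) (i : nat) : pt2 :=
  match i with 0 => o | 1 => v3 | 2 => v4 | 3 => v5 | _ => v6 end.

Definition strange (n : nat) (w : nat -> pt2) : Prop :=
  convex_polygon_ccw n w /\
  exists v3 v4 v5 v6 : pt2,
    (forall x, in_hull2 n w x <-> in_hull2 5 (five origin2 v3 v4 v5 v6) x) /\
    (n = 3%nat \/
     (rel_boundary2 (in_hull2 n w) origin2 /\
      forall v, In v (v3 :: v4 :: v5 :: v6 :: nil) ->
        extreme2 (in_hull2 n w) v /\ extreme3 (polytopeP n w) (lift v))).

(* Main.v *)
Require Import Defs.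
From Stdlib Require Import Reals Lra Lia Psatz Arith List.
Open Scope R_scope.

Lemma poly1 P t : 0 <= t <= 2/5*P ->
  (2/5*P-t)^2*t*(4/5*P-t) <= 16*(3/208*P^2 + P*t/10)^2.
Proof.
  intros.
  assert (0 <= (t^2 - 4/5*P*t + P^2/20)^2) by apply pow2_ge_0.
  assert (0 <= P^2*(t - 3/715*P)^2) by (apply Rmult_le_pos; apply pow2_ge_0).
  assert (0 <= P^4) by (replace (P^4) with ((P^2)^2) by ring; apply pow2_ge_0).
  assert (16*(3/208*P^2 + P*t/10)^2 - (2/5*P-t)^2*t*(4/5*P-t) =
     (t^2 - 4/5*P*t + P^2/20)^2 + 11/50 * (P^2*(t - 3/715*P)^2) + (9/2704 - 1/400 - 11/50*9/511225) * P^4) by field.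
  lra.
Qed.

Lemma pent_poly P s d Q E2 :
  0 <= d -> d <= s -> s <= 2/5*P ->
  8*Q <= (P - s + d)^2 -> 4*E2^2 <= d^2*(s^2-d^2) ->
  13*(Q+E2) <= 2*P^2.
Proof.
  intros H1 H2 H3 H4 H5.
  set (t := s - d).
  assert (Ht : 0 <= t) by (unfold t; lra).
  set (m := 2/5*P - t).
  assert (Hm : d <= m) by (unfold m, t; lra).
  assert (HA : d^2*(s^2-d^2) = d^2*t*(2*d+t)) by (unfold t; ring).
  assert (HB : d^2*t*(2*d+t) <= m^2*t*(2*m+t)).
  { assert (d^2 <= m^2) by nra. 
    assert (0 <= d^2) by nra.
    assert (2*d+t <= 2*m+t) by lra.
    assert (0 <= t*(2*d+t)) by nra.
    assert (d^2 * (t*(2*d+t)) <= m^2 * (t*(2*d+t))) by nra.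
    assert (0 <= m^2*t) by (apply Rmult_le_pos; [apply pow2_ge_0|lra]).
    assert (m^2*t*(2*d+t) <= m^2*t*(2*m+t)) by (apply Rmult_le_compat_l; lra).
    replace (d^2*t*(2*d+t)) with (d^2 * (t*(2*d+t))) by ring.
    replace (m^2*(t*(2*d+t))) with (m^2*t*(2*d+t)) in * by ring.
    lra. }
  assert (HC := poly1 P t ltac:(unfold t; lra)).
  set (R := P^2/13 - (P-t)^2/16).
  set (R0 := 3/208*P^2 + P*t/10).
  assert (HR0 : 0 <= R0) by (unfold R0; nra).
  assert (0 <= t*(2/5*P - t)) by (apply Rmult_le_pos; unfold t in *; lra).
  assert (HR : R0 <= R) by (unfold R, R0; nra).
  assert (Hmm : m^2*t*(2*m+t) = (2/5*P-t)^2*t*(4/5*P-t)) by (unfold m; field).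
  assert (R0^2 <= R^2) by (apply pow_incr; lra).
  assert (HE : 4*E2^2 <= 16*R^2) by (unfold R0 in *; lra).
  assert (HE2 : E2 <= 2*R) by nra.
  assert (HQ : 8*Q <= (P-t)^2) by (unfold t; replace (P - (s - d)) with (P - s + d) by ring; lra).
  unfold R in HE2. nra.
Qed.

Lemma dist_sym a b : dist2 a b = dist2 b a.
Proof. unfold dist2. f_equal. ring. Qed.

Lemma dist_nonneg a b : 0 <= dist2 a b.
Proof. apply sqrt_pos. Qed.

Lemma dist_sq a b : dist2 a b ^ 2 = (fst a - fst b)^2 + (snd a - snd b)^2.
Proof. unfold dist2. apply pow2_sqrt. assert (0 <= (fst a - fst b)^2) by apply pow2_ge_0. assert (0 <= (snd a - snd b)^2) by apply pow2_ge_0. lra. Qed.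

Lemma cross_le a b c d : cross2 (sub2 b a) (sub2 d c) <= dist2 a b * dist2 c d.
Proof.
  assert (H1 := dist_sq a b). assert (H2 := dist_sq c d).
  assert (H3 := dist_nonneg a b). assert (H4 := dist_nonneg c d).
  set (X := dist2 a b) in *. set (Y := dist2 c d) in *.
  unfold cross2, sub2; simpl.
  set (ux := fst b - fst a). set (uy := snd b - snd a).
  set (vx := fst d - fst c). set (vy := snd d - snd c).
  assert (E : (ux*vy - uy*vx)^2 + (ux*vx+uy*vy)^2 = (X*Y)^2).
  { replace ((X*Y)^2) with (X^2*Y^2) by ring. rewrite H1, H2. unfold ux, uy, vx, vy. ring. }
  assert (0 <= X*Y) by (apply Rmult_le_pos; auto).
  assert (0 <= (ux*vx+uy*vy)^2) by apply pow2_ge_0.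
  nra.
Qed.

Lemma quad_iso a b c d :
  8 * (cross2 a b + cross2 b c + cross2 c d + cross2 d a) <=
  (dist2 a b + dist2 b c + dist2 c d + dist2 d a)^2.
Proof.
  assert (E : 2*(cross2 a b + cross2 b c + cross2 c d + cross2 d a) =
     cross2 (sub2 b a) (sub2 c b) + cross2 (sub2 c d) (sub2 d a) +
     cross2 (sub2 b a) (sub2 d a) + cross2 (sub2 c b) (sub2 d c)).
  { unfold cross2, sub2; simpl; ring. }
  assert (H1 := cross_le a b b c).
  assert (H2 := cross_le d c a d).
  assert (H3 := cross_le a b a d).
  assert (H4 := cross_le b c c d).
  rewrite (dist_sym d c) in H2.
  rewrite (dist_sym a d) in H2, H3.
  assert (0 <= (dist2 a b + dist2 c d - dist2 b c - dist2 d a)^2) by apply pow2_ge_0.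
  nra.
Qed.

Lemma dist_tri e a b : dist2 e b <= dist2 e a + dist2 a b.
Proof.
  assert (H1 := dist_sq e a). assert (H2 := dist_sq a b). assert (H3 := dist_sq e b).
  assert (H4 := dist_nonneg e a). assert (H5 := dist_nonneg a b). assert (H6 := dist_nonneg e b).
  assert (H7 := cross_le e a a b).
  assert (H8 : (fst e - fst a)*(fst a - fst b) + (snd e - snd a)*(snd a - snd b) <= dist2 e a * dist2 a b).
  { assert (H9 := cross_le e a b a). rewrite (dist_sym b a) in H9.
    unfold cross2, sub2 in H9; simpl in H9.
    set (X := dist2 e a) in *. set (Y := dist2 a b) in *.
    assert (E : ((fst e - fst a)*(fst a - fst b) + (snd e - snd a)*(snd a - snd b))^2 +
               ((fst e - fst a)*(snd a - snd b) - (snd e - snd a)*(fst a - fst b))^2 = (X*Y)^2).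
    { replace ((X*Y)^2) with (X^2*Y^2) by ring. rewrite H1, H2. ring. }
    assert (0 <= X*Y) by (apply Rmult_le_pos; auto).
    assert (0 <= ((fst e - fst a)*(snd a - snd b) - (snd e - snd a)*(fst a - fst b))^2) by apply pow2_ge_0.
    nra. }
  assert (dist2 e b ^2 <= (dist2 e a + dist2 a b)^2).
  { rewrite H3. replace ((dist2 e a + dist2 a b)^2) with (dist2 e a ^2 + dist2 a b ^2 + 2*(dist2 e a * dist2 a b)) by ring.
    rewrite H1, H2. nra. }
  nra.
Qed.

Lemma ear_bound e a b :
  4 * (cross2 (sub2 a e) (sub2 b e))^2 <=
  dist2 e b ^2 * ((dist2 e a + dist2 a b)^2 - dist2 e b ^2).
Proof.
  assert (H1 := dist_sq e a). assert (H2 := dist_sq a b). assert (H3 := dist_sq e b).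
  assert (T := dist_tri e a b).
  assert (H4 := dist_nonneg e a). assert (H5 := dist_nonneg a b). assert (H6 := dist_nonneg e b).
  set (x := dist2 e a) in *. set (y := dist2 a b) in *. set (d := dist2 e b) in *.
  set (C := cross2 (sub2 a e) (sub2 b e)).
  set (D := (fst a - fst e)*(fst b - fst a) + (snd a - snd e)*(snd b - snd a)).
  assert (E1 : C^2 + D^2 = x^2*y^2).
  { rewrite H1, H2. unfold C, D, cross2, sub2; simpl. ring. }
  assert (E2 : d^2 = x^2 + y^2 + 2*D).
  { rewrite H1, H2, H3. unfold D. ring. }
  assert (E3 : d^2*((x+y)^2 - d^2) - 4*C^2 = (x-y)^2*((x+y)^2 - d^2)).
  { assert (4*C^2 = 4*x^2*y^2 - 4*D^2) by lra.
    assert (2*D = d^2 - x^2 - y^2) by lra.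
    assert (4*D^2 = (d^2-x^2-y^2)^2) by nra.
    nra. }
  assert (0 <= (x+y)^2 - d^2) by nra.
  assert (0 <= (x-y)^2*((x+y)^2 - d^2)) by (apply Rmult_le_pos; [apply pow2_ge_0|auto]).
  lra.
Qed.

Lemma pent_iso a b c d e :
  dist2 e a + dist2 a b <= 2/5*(dist2 a b + dist2 b c + dist2 c d + dist2 d e + dist2 e a) ->
  13*(/2*(cross2 a b + cross2 b c + cross2 c d + cross2 d e + cross2 e a)) <=
  (dist2 a b + dist2 b c + dist2 c d + dist2 d e + dist2 e a)^2.
Proof.
  intro Hs.
  assert (HQ := quad_iso b c d e).
  assert (HE := ear_bound e a b).
  assert (T := dist_tri e a b).
  assert (H0 := dist_nonneg e b).
  assert (Hk := pent_poly (dist2 a b + dist2 b c + dist2 c d + dist2 d e + dist2 e a)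
     (dist2 e a + dist2 a b) (dist2 e b) (cross2 b c + cross2 c d + cross2 d e + cross2 e b)
     (cross2 (sub2 a e) (sub2 b e)) H0 T Hs).
  assert (E1 : cross2 b c + cross2 c d + cross2 d e + cross2 e b + cross2 (sub2 a e) (sub2 b e)
     = cross2 a b + cross2 b c + cross2 c d + cross2 d e + cross2 e a)
    by (unfold cross2, sub2; simpl; ring).
  rewrite <- E1.
  replace (dist2 a b + dist2 b c + dist2 c d + dist2 d e + dist2 e a - (dist2 e a + dist2 a b) + dist2 e b)
    with (dist2 b c + dist2 c d + dist2 d e + dist2 e b) in Hk by ring.
  specialize (Hk HQ HE). lra.
Qed.

Lemma rsum_ext n f g : (forall i, (i < n)%nat -> f i = g i) -> rsum n f = rsum n g.
Proof.
  induction n; intros H; simpl; auto.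
  rewrite IHn by (intros; apply H; lia). rewrite H by lia. reflexivity.
Qed.

Lemma rsum_nonneg n f : (forall i, (i < n)%nat -> 0 <= f i) -> 0 <= rsum n f.
Proof.
  induction n; intros H; simpl; [lra|].
  assert (0 <= rsum n f) by (apply IHn; intros; apply H; lia).
  assert (0 <= f n) by (apply H; lia). lra.
Qed.

Lemma rsum_zero n f : (forall i, (i < n)%nat -> 0 <= f i) -> rsum n f = 0 ->
  forall i, (i < n)%nat -> f i = 0.
Proof.
  induction n; intros H Hs i Hi; [lia|].
  simpl in Hs.
  assert (0 <= rsum n f) by (apply rsum_nonneg; intros; apply H; lia).
  assert (0 <= f n) by (apply H; lia).
  destruct (Nat.eq_dec i n) as [->|Hne]; [lra|].
  apply IHn; [intros; apply H; lia|lra|lia].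
Qed.

Lemma rsum_aff k lam (p : nat -> pt2) a b c :
  a * rsum k (fun i => lam i * fst (p i)) + b * rsum k (fun i => lam i * snd (p i)) + c * rsum k lam
  = rsum k (fun i => lam i * (a * fst (p i) + b * snd (p i) + c)).
Proof. induction k; simpl; [ring|]. rewrite <- IHk. ring. Qed.

Lemma hull_aff k p x a b c lam :
  rsum k lam = 1 -> fst x = rsum k (fun i => lam i * fst (p i)) ->
  snd x = rsum k (fun i => lam i * snd (p i)) ->
  a * fst x + b * snd x + c = rsum k (fun i => lam i * (a * fst (p i) + b * snd (p i) + c)).
Proof.
  intros H1 H2 H3. rewrite <- rsum_aff. rewrite H1, <- H2, <- H3. ring.
Qed.

Lemma hull_aff_nonneg k p x a b c :
  in_hull2 k p x -> (forall i, (i < k)%nat -> 0 <= a * fst (p i) + b * snd (p i) + c) ->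
  0 <= a * fst x + b * snd x + c.
Proof.
  intros [lam [Hl [H1 [H2 H3]]]] Hv.
  rewrite (hull_aff k p x a b c lam H1 H2 H3).
  apply rsum_nonneg. intros i Hi. apply Rmult_le_pos; auto.
Qed.

Lemma rsum_ind n j (g : nat -> R) :
  rsum n (fun i => (if Nat.eqb i j then 1 else 0) * g i) = if Nat.ltb j n then g j else 0.
Proof.
  induction n; simpl; [reflexivity|].
  rewrite IHn.
  destruct (Nat.eqb_spec n j) as [->|Hne].
  - replace (Nat.ltb j j) with false by (symmetry; apply Nat.ltb_ge; lia).
    replace (Nat.ltb j (S j)) with true by (symmetry; apply Nat.ltb_lt; lia). ring.
  - destruct (Nat.ltb_spec j n); destruct (Nat.ltb_spec j (S n)); try lia; ring.
Qed.

Lemma vertex_in_hull n (w : nat -> pt2) j : (j < n)%nat -> in_hull2 n w (w j).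
Proof.
  intros Hj. exists (fun i => if Nat.eqb i j then 1 else 0).
  assert (Hlt : Nat.ltb j n = true) by (apply Nat.ltb_lt; auto).
  split; [intros i _; destruct (Nat.eqb i j); lra|].
  split; [|split].
  - rewrite (rsum_ext n _ (fun i => (if Nat.eqb i j then 1 else 0) * 1)) by (intros; ring).
    rewrite rsum_ind, Hlt. reflexivity.
  - rewrite rsum_ind, Hlt. reflexivity.
  - rewrite rsum_ind, Hlt. reflexivity.
Qed.

Definition cvx (n : nat) (w : nat -> pt2) := forall i j, (i < n)%nat -> (j < n)%nat -> j <> i -> j <> nxt n i ->
    cross2 (sub2 (w (nxt n i)) (w i)) (sub2 (w j) (w i)) > 0.

Lemma sup_nonneg n w (H : cvx n w) i : (i < n)%nat -> forall x, in_hull2 n w x ->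
  0 <= cross2 (sub2 (w (nxt n i)) (w i)) (sub2 x (w i)).
Proof.
  intros Hi x Hx.
  set (d := sub2 (w (nxt n i)) (w i)).
  assert (E : forall y, cross2 d (sub2 y (w i)) =
     (- snd d) * fst y + fst d * snd y + (snd d * fst (w i) - fst d * snd (w i))).
  { intros y. unfold cross2, sub2. simpl. ring. }
  rewrite E. apply (hull_aff_nonneg n w). auto.
  intros k Hk. rewrite <- E.
  destruct (Nat.eq_dec k i) as [->|H1].
  - unfold cross2, sub2; simpl. lra.
  - destruct (Nat.eq_dec k (nxt n i)) as [->|H2].
    + unfold d, cross2, sub2; simpl. lra.
    + apply Rlt_le. apply H; auto.
Qed.

Lemma cross_origin n w (H : cvx n w) i : (i < n)%nat -> in_hull2 n w origin2 ->
  0 <= cross2 (w i) (w (nxt n i)).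
Proof.
  intros Hi Ho. assert (X := sup_nonneg n w H i Hi origin2 Ho).
  unfold cross2, sub2, origin2 in *; simpl in *. lra.
Qed.

Lemma two_lines (d1 d2 y : pt2) : cross2 d1 y = 0 -> cross2 d2 y = 0 -> cross2 d1 d2 <> 0 ->
  y = (0, 0).
Proof.
  destruct d1 as [ax ay], d2 as [bx b_y], y as [yx yy]. unfold cross2; simpl.
  intros e1 e2 hd.
  assert (yx * (ax*b_y - ay*bx) = bx*(ax*yy - ay*yx) - ax*(bx*yy - b_y*yx)) by ring.
  assert (yy * (ax*b_y - ay*bx) = b_y*(ax*yy - ay*yx) - ay*(bx*yy - b_y*yx)) by ring.
  rewrite e1, e2 in *.
  assert (yx = 0). { apply (Rmult_eq_reg_r (ax*b_y - ay*bx)); auto. lra. }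
  assert (yy = 0). { apply (Rmult_eq_reg_r (ax*b_y - ay*bx)); auto. lra. }
  subst; reflexivity.
Qed.

Lemma rsum_pos n f : 0 < rsum n f -> exists i, (i < n)%nat /\ 0 < f i.
Proof.
  induction n; simpl; intros H; [lra|].
  destruct (Rlt_dec 0 (f n)) as [h|h].
  - exists n; split; auto.
  - destruct IHn as [i [Hi Hf]]; [lra|]. exists i; split; auto.
Qed.

Lemma in_five n w (H : cvx n w) (F : nat -> pt2)
  (Hiff : forall x, in_hull2 n w x <-> in_hull2 5 F x) j pj :
  (j < n)%nat -> (pj < n)%nat -> nxt n pj = j -> pj <> j -> pj <> nxt n j ->
  exists k, (k < 5)%nat /\ F k = w j.
Proof.
  intros Hj Hpj Hn Hne1 Hne2.
  assert (hj : in_hull2 5 F (w j)) by (apply Hiff; apply vertex_in_hull; auto).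
  assert (hF : forall k, (k < 5)%nat -> in_hull2 n w (F k)) by (intros; apply Hiff; apply vertex_in_hull; auto).
  destruct hj as [mu [Hmu [S1 [Sx Sy]]]].
  set (d1 := sub2 (w (nxt n j)) (w j)).
  set (d2 := sub2 (w j) (w pj)).
  assert (E1 : forall y, cross2 d1 (sub2 y (w j)) =
     (- snd d1) * fst y + fst d1 * snd y + (snd d1 * fst (w j) - fst d1 * snd (w j))).
  { intros y. unfold cross2, sub2. simpl. ring. }
  assert (E2 : forall y, cross2 d2 (sub2 y (w pj)) =
     (- snd d2) * fst y + fst d2 * snd y + (snd d2 * fst (w pj) - fst d2 * snd (w pj))).
  { intros y. unfold cross2, sub2. simpl. ring. }
  assert (P1 : forall k, (k < 5)%nat -> 0 <= mu k * cross2 d1 (sub2 (F k) (w j))).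
  { intros k Hk. apply Rmult_le_pos; auto. apply sup_nonneg; auto. }
  assert (P2 : forall k, (k < 5)%nat -> 0 <= mu k * cross2 d2 (sub2 (F k) (w pj))).
  { intros k Hk. apply Rmult_le_pos; auto. unfold d2. rewrite <- Hn. apply sup_nonneg; auto. }
  assert (Z1 : rsum 5 (fun k => mu k * cross2 d1 (sub2 (F k) (w j))) = 0).
  { rewrite (rsum_ext 5 _ (fun k => mu k * ((- snd d1) * fst (F k) + fst d1 * snd (F k) + (snd d1 * fst (w j) - fst d1 * snd (w j))))) by (intros; rewrite E1; reflexivity).
    rewrite <- (hull_aff 5 F (w j)); auto. rewrite <- E1. unfold cross2, sub2; simpl; ring. }
  assert (Z2 : rsum 5 (fun k => mu k * cross2 d2 (sub2 (F k) (w pj))) = 0).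
  { rewrite (rsum_ext 5 _ (fun k => mu k * ((- snd d2) * fst (F k) + fst d2 * snd (F k) + (snd d2 * fst (w pj) - fst d2 * snd (w pj))))) by (intros; rewrite E2; reflexivity).
    rewrite <- (hull_aff 5 F (w j)); auto. rewrite <- E2. unfold d2, cross2, sub2; simpl; ring. }
  assert (Q1 := rsum_zero 5 _ P1 Z1).
  assert (Q2 := rsum_zero 5 _ P2 Z2).
  destruct (rsum_pos 5 mu) as [k [Hk Hmk]]; [lra|].
  exists k; split; auto.
  assert (F1 : cross2 d1 (sub2 (F k) (w j)) = 0).
  { specialize (Q1 k Hk). apply Rmult_integral in Q1. destruct Q1; [lra|auto]. }
  assert (F2 : cross2 d2 (sub2 (F k) (w pj)) = 0).
  { specialize (Q2 k Hk). apply Rmult_integral in Q2. destruct Q2; [lra|auto]. }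
  assert (F2' : cross2 d2 (sub2 (F k) (w j)) = 0).
  { rewrite <- F2. unfold d2, cross2, sub2; simpl; ring. }
  assert (Hd : cross2 d1 d2 <> 0).
  { assert (X := H j pj Hj Hpj Hne1 Hne2). fold d1 in X.
    unfold d2, cross2, sub2 in *; simpl in *. lra. }
  assert (Y := two_lines d1 d2 _ F1 F2' Hd).
  destruct (F k) as [a b], (w j) as [c e]. unfold sub2 in Y; simpl in Y.
  injection Y; intros. f_equal; lra.
Qed.

Lemma nxt_small n i : (S i < n)%nat -> nxt n i = S i.
Proof. intros. unfold nxt. apply Nat.mod_small. auto. Qed.

Lemma nxt_last n : (1 <= n)%nat -> nxt n (n - 1) = 0%nat.
Proof. intros. unfold nxt. replace (S (n-1)) with n by lia. apply Nat.Div0.mod_same. Qed.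

Lemma n_le5 n w (H : cvx n w) (H3 : (3 <= n)%nat) (F : nat -> pt2)
  (Hiff : forall x, in_hull2 n w x <-> in_hull2 5 F x) : (n <= 5)%nat.
Proof.
  destruct (le_lt_dec n 5) as [h|h]; auto. exfalso.
  assert (inF : forall j, (j <= 5)%nat -> In (w j) (F 0 :: F 1 :: F 2 :: F 3 :: F 4 :: nil)%nat).
  { intros j Hj.
    assert (Ex : exists k, (k < 5)%nat /\ F k = w j).
    { destruct (Nat.eq_dec j 0) as [->|Hj0].
      - apply (in_five n w H F Hiff 0 (n-1)); try lia.
        + apply nxt_last; lia.
        + rewrite nxt_small by lia. lia.
      - destruct (Nat.eq_dec j 5) as [->|Hj5].
        + apply (in_five n w H F Hiff 5 4); try lia.
          * apply nxt_small; lia.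
          * destruct (Nat.eq_dec n 6) as [->|Hn6].
            -- unfold nxt. simpl. lia.
            -- rewrite nxt_small by lia. lia.
        + apply (in_five n w H F Hiff j (j-1)); try lia.
          * replace j with (S (j-1)) at 2 by lia. apply nxt_small; lia.
          * rewrite nxt_small by lia. lia. }
    destruct Ex as [k [Hk Hw]]. rewrite <- Hw.
    destruct k as [|[|[|[|[|k]]]]]; simpl; tauto || lia. }
  assert (neq1 : forall i j, (i < n)%nat -> (j < n)%nat -> j <> i -> j <> nxt n i -> w j <> w i).
  { intros i j Hi Hj a b E. assert (X := H i j Hi Hj a b). rewrite E in X.
    unfold cross2, sub2 in X; simpl in X. lra. }
  assert (neq2 : forall i k, (i < n)%nat -> (k < n)%nat -> k <> i -> k <> nxt n i -> w (nxt n i) <> w i).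
  { intros i k Hi Hk a b E. assert (X := H i k Hi Hk a b). rewrite E in X.
    unfold cross2, sub2 in X; simpl in X. lra. }
  assert (D : forall i j, (i < j)%nat -> (j <= 5)%nat -> w i <> w j).
  { intros i j Hij Hj5.
    destruct (Nat.eq_dec j (S i)) as [->|Hne].
    - intro E. symmetry in E. rewrite <- (nxt_small n i) in E by lia.
      destruct (Nat.eq_dec i 0) as [->|Hi0].
      + apply (neq2 0 2)%nat in E; auto; try lia. rewrite nxt_small; lia.
      + apply (neq2 i 0)%nat in E; auto; try lia. rewrite nxt_small; lia.
    - intro E. symmetry in E. apply (neq1 i j) in E; auto; try lia. rewrite nxt_small; lia. }
  assert (ND : NoDup (w 0 :: w 1 :: w 2 :: w 3 :: w 4 :: w 5 :: nil)%nat).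
  { repeat (apply NoDup_cons; [simpl; intros Hin;
      repeat (destruct Hin as [Hin|Hin]; [eapply D; [| | exact (eq_sym Hin)]; lia|]); exact Hin|]).
    apply NoDup_nil. }
  assert (Inc : incl (w 0 :: w 1 :: w 2 :: w 3 :: w 4 :: w 5 :: nil)%nat (F 0 :: F 1 :: F 2 :: F 3 :: F 4 :: nil)%nat).
  { intros x Hx. simpl in Hx.
    repeat (destruct Hx as [Hx|Hx]; [subst x; apply inF; lia|]). destruct Hx. }
  assert (L := NoDup_incl_length ND Inc). simpl in L. lia.
Qed.

Lemma tri_e3 a b : tri_area (lift a) (lift b) e3 = /2 * sqrt (dist2 a b ^2 + cross2 a b ^2).
Proof. unfold tri_area, norm3. rewrite dist_sq. f_equal. f_equal.
  unfold dot3, cross3, sub3, lift, e3, cross2; simpl. ring. Qed.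

Lemma tri_e3m a b : tri_area (lift a) (lift b) e3m = /2 * sqrt (dist2 a b ^2 + cross2 a b ^2).
Proof. unfold tri_area, norm3. rewrite dist_sq. f_equal. f_equal.
  unfold dot3, cross3, sub3, lift, e3m, cross2; simpl. ring. Qed.

Lemma tet_e3 a b : tet_vol (lift a) (lift b) e3 = /6 * Rabs (cross2 a b).
Proof. unfold tet_vol. f_equal. f_equal. unfold dot3, cross3, lift, e3, cross2; simpl. ring. Qed.

Lemma tet_e3m a b : tet_vol (lift a) (lift b) e3m = /6 * Rabs (cross2 a b).
Proof. unfold tet_vol. rewrite <- Rabs_Ropp. f_equal. f_equal. unfold dot3, cross3, lift, e3m, cross2; simpl. ring. Qed.

Lemma mink2 x1 y1 x2 y2 :
  sqrt ((x1+x2)^2 + (y1+y2)^2) <= sqrt (x1^2+y1^2) + sqrt (x2^2+y2^2).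
Proof.
  assert (h1 : 0 <= x1^2+y1^2) by (assert (0 <= x1^2) by apply pow2_ge_0; assert (0 <= y1^2) by apply pow2_ge_0; lra).
  assert (h2 : 0 <= x2^2+y2^2) by (assert (0 <= x2^2) by apply pow2_ge_0; assert (0 <= y2^2) by apply pow2_ge_0; lra).
  assert (s1 := pow2_sqrt _ h1). assert (s2 := pow2_sqrt _ h2).
  assert (p1 := sqrt_pos (x1^2+y1^2)). assert (p2 := sqrt_pos (x2^2+y2^2)).
  set (a := sqrt (x1^2+y1^2)) in *. set (b := sqrt (x2^2+y2^2)) in *.
  assert (0 <= a*b) by (apply Rmult_le_pos; auto).
  assert (E : (a*b)^2 = (x1*x2+y1*y2)^2 + (x1*y2-y1*x2)^2).
  { replace ((a*b)^2) with (a^2*b^2) by ring. rewrite s1, s2. ring. }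
  assert (0 <= (x1*y2-y1*x2)^2) by apply pow2_ge_0.
  assert (x1*x2+y1*y2 <= a*b) by nra.
  rewrite <- (sqrt_pow2 (a+b)) by lra.
  apply sqrt_le_1_alt.
  replace ((a+b)^2) with (a^2 + b^2 + 2*(a*b)) by ring. rewrite s1, s2. nra.
Qed.

Lemma mink n (a b : nat -> R) :
  sqrt ((rsum n a)^2 + (rsum n b)^2) <= rsum n (fun i => sqrt (a i ^2 + b i ^2)).
Proof.
  induction n; cbn [rsum].
  - replace (0^2+0^2) with 0 by ring. rewrite sqrt_0. lra.
  - eapply Rle_trans; [apply mink2|]. lra.
Qed.

Lemma final K C p S : 0 < C -> 13*(/2*C) <= p^2 -> sqrt (p^2 + C^2) <= S -> 0 < K ->
  K^2 * C < 81 * (13/2 + C)^3 -> S^3 / (/3*C)^2 > K.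
Proof.
  intros HC Hp HS HK Hpoly.
  assert (h0 : 0 <= p^2 + C^2) by (assert (0 <= p^2) by apply pow2_ge_0; nra).
  assert (r2 := pow2_sqrt _ h0). assert (r0 := sqrt_pos (p^2+C^2)).
  set (r := sqrt (p^2+C^2)) in *.
  assert (Hr2 : C*(13/2 + C) <= r^2) by lra.
  assert (Hr6 : (r^2)^3 >= (C*(13/2+C))^3).
  { apply Rle_ge. apply pow_incr. split; [nra|lra]. }
  assert (X : (K*C^2/9)^2 < (r^3)^2).
  { replace ((r^3)^2) with ((r^2)^3) by ring.
    assert ((K*C^2/9)^2 < (C*(13/2+C))^3).
    { replace ((K*C^2/9)^2) with (C^3 * (K^2*C/81)) by field.
      replace ((C*(13/2+C))^3) with (C^3 * (13/2+C)^3) by ring.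
      apply Rmult_lt_compat_l. apply pow_lt; lra. lra. }
    lra. }
  assert (Y : K*C^2/9 < r^3).
  { assert (0 <= r^3) by (apply pow_le; lra).
    destruct (Rlt_le_dec (K*C^2/9) (r^3)) as [h|h]; auto.
    assert (0 <= K*C^2/9) by (apply Rmult_le_pos; [apply Rmult_le_pos; [lra|apply pow2_ge_0]|lra]).
    assert ((r^3)^2 <= (K*C^2/9)^2) by (apply pow_incr; lra). lra. }
  assert (Z : r^3 <= S^3) by (apply pow_incr; lra).
  apply Rlt_gt.
  replace (S^3 / (/3*C)^2) with (9 * S^3 / C^2) by (field; lra).
  apply (Rmult_lt_reg_r (C^2)). apply pow_lt; lra.
  replace (9 * S^3 / C^2 * C^2) with (9*S^3) by (field; lra).
  lra.
Qed.

Lemma cube_lb x0 x : 0 <= x0 -> x0 <= x -> x0^3 + 3*x0^2*(x-x0) <= x^3.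
Proof.
  intros. assert (0 <= (x-x0)^2*(x+2*x0)) by (apply Rmult_le_pos; [apply pow2_ge_0|lra]).
  nra.
Qed.

Lemma num1 C : 0 < C -> (/2*C <= 411/1000 \/ /2*C >= 51/10) -> 188^2 * C < 81*(13/2+C)^3.
Proof.
  intros H [h|h].
  - assert (X := cube_lb (13/2) (13/2+C) ltac:(lra) ltac:(lra)). nra.
  - assert (X := cube_lb (13/2+102/10) (13/2+C) ltac:(lra) ltac:(lra)). nra.
Qed.

Lemma num2 C : 0 < C -> (/2*C <= 9/100 \/ /2*C >= 15) -> 344^2 * C < 81*(13/2+C)^3.
Proof.
  intros H [h|h].
  - assert (X := cube_lb (13/2) (13/2+C) ltac:(lra) ltac:(lra)). nra.
  - assert (X := cube_lb (13/2+30) (13/2+C) ltac:(lra) ltac:(lra)). nra.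
Qed.

Lemma cross_self a : cross2 a a = 0.
Proof. unfold cross2. ring. Qed.
Lemma dist_self a : dist2 a a = 0.
Proof. unfold dist2. replace ((fst a - fst a)^2 + (snd a - snd a)^2) with 0 by ring. apply sqrt_0. Qed.

Definition Cs n (w : nat -> pt2) := rsum n (fun i => cross2 (w i) (w (nxt n i))).
Definition Ps n (w : nat -> pt2) := rsum n (fun i => dist2 (w i) (w (nxt n i))).

Ltac gH H i j := let X := fresh "X" in
  assert (X := H i j); unfold nxt in X; simpl in X;
  specialize (X ltac:(lia) ltac:(lia) ltac:(lia) ltac:(lia)).

Lemma iso3 w (H : cvx 3 w) : 13*(/2*Cs 3 w) <= (Ps 3 w)^2 /\ 0 < Cs 3 w.
Proof.
  unfold Cs, Ps, cvx in *. unfold nxt; simpl.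
  gH H 0%nat 2%nat.
  assert (Q := quad_iso (w 0%nat) (w 1%nat) (w 2%nat) (w 2%nat)).
  rewrite cross_self, dist_self in Q.
  assert (E : cross2 (w 0%nat) (w 1%nat) + cross2 (w 1%nat) (w 2%nat) + cross2 (w 2%nat) (w 0%nat)
     = cross2 (sub2 (w 1%nat) (w 0%nat)) (sub2 (w 2%nat) (w 0%nat))) by (unfold cross2, sub2; simpl; ring).
  split; lra.
Qed.

Lemma iso4 w (H : cvx 4 w) : 13*(/2*Cs 4 w) <= (Ps 4 w)^2 /\ 0 < Cs 4 w.
Proof.
  unfold Cs, Ps, cvx in *. unfold nxt; simpl.
  gH H 0%nat 2%nat. gH H 2%nat 0%nat.
  assert (Q := quad_iso (w 0%nat) (w 1%nat) (w 2%nat) (w 3%nat)).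
  assert (E : cross2 (w 0%nat) (w 1%nat) + cross2 (w 1%nat) (w 2%nat) + cross2 (w 2%nat) (w 3%nat) + cross2 (w 3%nat) (w 0%nat)
     = cross2 (sub2 (w 1%nat) (w 0%nat)) (sub2 (w 2%nat) (w 0%nat))
     + cross2 (sub2 (w 3%nat) (w 2%nat)) (sub2 (w 0%nat) (w 2%nat))) by (unfold cross2, sub2; simpl; ring).
  split; lra.
Qed.

Lemma iso5 w (H : cvx 5 w) : 13*(/2*Cs 5 w) <= (Ps 5 w)^2 /\ 0 < Cs 5 w.
Proof.
  unfold Cs, Ps, cvx in *. unfold nxt; simpl.
  gH H 0%nat 2%nat. gH H 2%nat 0%nat. gH H 3%nat 0%nat.
  assert (E : cross2 (w 0%nat) (w 1%nat) + cross2 (w 1%nat) (w 2%nat) + cross2 (w 2%nat) (w 3%nat) + cross2 (w 3%nat) (w 4%nat) + cross2 (w 4%nat) (w 0%nat)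
     = cross2 (sub2 (w 1%nat) (w 0%nat)) (sub2 (w 2%nat) (w 0%nat))
     + cross2 (sub2 (w 3%nat) (w 2%nat)) (sub2 (w 0%nat) (w 2%nat))
     + cross2 (sub2 (w 4%nat) (w 3%nat)) (sub2 (w 0%nat) (w 3%nat))) by (unfold cross2, sub2; simpl; ring).
  split; [|lra].
  set (a := w 0%nat). set (b := w 1%nat). set (c := w 2%nat). set (d := w 3%nat). set (e := w 4%nat).
  set (P := dist2 a b + dist2 b c + dist2 c d + dist2 d e + dist2 e a).
  destruct (Rle_dec (dist2 e a + dist2 a b) (2/5*P)) as [h|h].
  { assert (K := pent_iso a b c d e h). fold P in K. unfold P in K. lra. }
  destruct (Rle_dec (dist2 a b + dist2 b c) (2/5*P)) as [h1|h1].
  { assert (K := pent_iso b c d e a ltac:(unfold P in h1; lra)). lra. }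
  destruct (Rle_dec (dist2 b c + dist2 c d) (2/5*P)) as [h2|h2].
  { assert (K := pent_iso c d e a b ltac:(unfold P in h2; lra)). lra. }
  destruct (Rle_dec (dist2 c d + dist2 d e) (2/5*P)) as [h3|h3].
  { assert (K := pent_iso d e a b c ltac:(unfold P in h3; lra)). lra. }
  destruct (Rle_dec (dist2 d e + dist2 e a) (2/5*P)) as [h4|h4].
  { assert (K := pent_iso e a b c d ltac:(unfold P in h4; lra)). lra. }
  exfalso. unfold P in *. lra.
Qed.

Lemma rsum_scal n k f : rsum n (fun i => k * f i) = k * rsum n f.
Proof. induction n; simpl; [ring|]. rewrite IHn. ring. Qed.

Theorem mainTheorem8 (n : nat) (w : nat -> pt2) (HP : strange n w) :
  ((polygon_area n w <= 411 / 1000 \/ polygon_area n w >= 51 / 10) ->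
     surface_area n w ^ 3 / volume n w ^ 2 > 188) /\
  ((polygon_area n w <= 9 / 100 \/ polygon_area n w >= 15) ->
     surface_area n w ^ 3 / volume n w ^ 2 > 344).
Proof.
  destruct HP as [[H3 Hc] [v3 [v4 [v5 [v6 [Hiff _]]]]]].
  set (F := five origin2 v3 v4 v5 v6) in *.
  assert (Hcv : cvx n w) by exact Hc.
  assert (H5 := n_le5 n w Hcv H3 F Hiff).
  assert (Ho : in_hull2 n w origin2).
  { apply Hiff. change origin2 with (F 0%nat). apply vertex_in_hull. lia. }
  assert (Hcn : forall i, (i < n)%nat -> 0 <= cross2 (w i) (w (nxt n i)))
    by (intros; apply cross_origin; auto).
  assert (ES : surface_area n w = rsum n (fun i => sqrt (dist2 (w i) (w (nxt n i)) ^2 + cross2 (w i) (w (nxt n i)) ^2))).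
  { unfold surface_area. apply rsum_ext. intros. rewrite tri_e3, tri_e3m. field. }
  assert (EV : volume n w = /3 * Cs n w).
  { unfold volume, Cs. rewrite <- rsum_scal. apply rsum_ext. intros i Hi.
    rewrite tet_e3, tet_e3m. rewrite Rabs_pos_eq by auto. field. }
  assert (EA : polygon_area n w = /2 * Cs n w) by reflexivity.
  assert (HI : 13*(/2*Cs n w) <= (Ps n w)^2 /\ 0 < Cs n w).
  { assert (Hn : (n = 3 \/ n = 4 \/ n = 5)%nat) by lia.
    destruct Hn as [ Hn | [ Hn | Hn ] ]; subst n.
    - apply iso3; auto. - apply iso4; auto. - apply iso5; auto. }
  destruct HI as [Hiso HC].
  assert (HS : sqrt ((Ps n w)^2 + (Cs n w)^2) <= surface_area n w).
  { rewrite ES. apply mink. }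
  rewrite EA, EV.
  split; intros Hr.
  - apply (final 188 (Cs n w) (Ps n w)); auto; try lra. apply num1; auto.
  - apply (final 344 (Cs n w) (Ps n w)); auto; try lra. apply num2; auto.
Qed.
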